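(* Fix $q\in[0,1)$. Let $F_n=\max\{I_1,\dots,I_n\}-n$, where $(I_i)_{i\ge1}$ comes from the infinite Bernoulli model. Then for any sequence $(a_n)_{n\ge1}$ of positive reals with $a_n/\log n\to\infty$, we have $F_n/a_n\to0$ almost surely. In particular $F_n/n\to0$ almost surely.
   Context: Infinite Bernoulli model: $(B_{i,j})_{i,j\ge1}$ are independent Bernoulli$(1-q)$ random variables and $I_i=\min\{j\notin\{I_1,\dots,I_{i-1}\}:B_{i,j}=1\}$ for $i\ge1$. *)

(* Defs.v *)
From HB Require Import structures.
From mathcomp Require Import all_boot all_order all_algebra.
From mathcomp Require Import all_classical all_reals all_analysis.
Set Implicit Arguments. Unset Strict Implicit. Unset Printing Implicit Defensive.
Import Order.TTheory GRing.Theory Num.Theory.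
Local Open Scope classical_set_scope.
Local Open Scope ring_scope.

Definition mutually_independent_bool {R : realType} {d : measure_display}
  {T : measurableType d} (P : probability T R) {I : eqType}
  (X : I -> T -> bool) : Prop :=
  forall (s : seq I) (b : I -> bool), uniq s ->
    P (\bigcap_(k in [set k | k \in s]) [set w | X k w = b k]) =
    (\prod_(k <- s) P [set w | X k w = b k])%E.

(* Infinite Bernoulli model (1-based indices; B i j for i, j >= 1 matter).
   next_index B w i prev = min { j >= 1 : j \notin prev, B i j w = true },
   with the (probability-zero) convention 0 if no such j exists. *)
Definition next_index {T : Type} (B : nat -> nat -> T -> bool) (w : T)
  (i : nat) (prev : seq nat) : nat :=
  match pselect (exists j : nat, [&& (0 < j)%N, j \notin prev & B i j w]) with
  | left h => ex_minn h
  | right _ => 0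
  end.

(* Iseq B w n = [:: I_1; ...; I_n] evaluated at outcome w. *)
Fixpoint Iseq {T : Type} (B : nat -> nat -> T -> bool) (w : T) (n : nat)
  : seq nat :=
  match n with
  | 0 => [::]
  | m.+1 => rcons (Iseq B w m) (next_index B w m.+1 (Iseq B w m))
  end.

Definition Ivar {T : Type} (B : nat -> nat -> T -> bool) (i : nat) (w : T) : nat :=
  nth 0 (Iseq B w i) i.-1.

Definition Fvar {R : realType} {T : Type} (B : nat -> nat -> T -> bool)
  (n : nat) (w : T) : R :=
  ((\max_(i <- Iseq B w n) i)%N)%:R - n%:R.

(* Main.v *)
Require Import Defs.
From HB Require Import structures.
From mathcomp Require Import all_boot all_order all_algebra.
From mathcomp Require Import all_classical all_reals all_analysis.
Import Order.TTheory GRing.Theory Num.Theory.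
Local Open Scope classical_set_scope.
Local Open Scope ring_scope.
Set Implicit Arguments. Unset Strict Implicit. Unset Printing Implicit Defensive.
From mathcomp Require Import ring lra.
From mathcomp Require Import zify.
From Stdlib Require Import Lia.
Lemma next_index_gt0 (T : Type) (B : nat -> nat -> T -> bool) w i prev :
  (0 < next_index B w i prev)%N ->
  [/\ next_index B w i prev \notin prev, B i (next_index B w i prev) w &
     forall j, (0 < j < next_index B w i prev)%N -> j \notin prev -> ~~ B i j w].
Proof.
rewrite /next_index; case: pselect => [h|_]; last by [].
case: ex_minnP => x /and3P[x0 xp Bx] xmin _; split => // j /andP[j0 jx] jp.
apply/negP => Bj; have := xmin j; rewrite j0 jp Bj => /(_ isT).
by rewrite leqNgt jx.
Qed.
Lemma next_index_eq (T : Type) (B : nat -> nat -> T -> bool) w i prev x :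
  (0 < x)%N -> x \notin prev -> B i x w ->
  (forall j, (0 < j < x)%N -> j \notin prev -> ~~ B i j w) ->
  next_index B w i prev = x.
Proof.
move=> x0 xp Bx xmin; rewrite /next_index; case: pselect => [h|nh]; last first.
  by exfalso; apply: nh; exists x; rewrite x0 xp Bx.
case: ex_minnP => y /and3P[y0 yp By] ymin.
apply/eqP; rewrite eqn_leq ymin ?x0 ?xp ?Bx //= leqNgt; apply/negP => yx.
by have := xmin y; rewrite y0 yx yp => /(_ isT isT); rewrite By.
Qed.
Lemma next_index_pos (T : Type) (B : nat -> nat -> T -> bool) w i prev :
  (forall M, exists j, (M < j)%N /\ B i j w) -> (0 < next_index B w i prev)%N.
Proof.
move=> h; rewrite /next_index; case: pselect => [e|ne]; last first.
  exfalso; have [j [jM Bj]] := h (\max_(x <- prev) x)%N; apply: ne; exists j.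
  rewrite Bj andbT (leq_ltn_trans _ jM) //=; apply/negP => jp.
  by have := @leq_bigmax_seq _ prev xpredT (fun x => x) j jp isT; rewrite leqNgt jM.
by case: ex_minnP => x /and3P[].
Qed.
Lemma size_Iseq (T : Type) (B : nat -> nat -> T -> bool) w m :
  size (Iseq B w m) = m.
Proof. by elim: m => //= m IH; rewrite size_rcons IH. Qed.
Lemma take_Iseq (T : Type) (B : nat -> nat -> T -> bool) w m r :
  (r <= m)%N -> take r (Iseq B w m) = Iseq B w r.
Proof.
elim: m => [|m IH]; first by rewrite leqn0 => /eqP ->.
rewrite leq_eqVlt => /orP[/eqP ->|]; first by rewrite take_oversize // size_Iseq.
rewrite ltnS => rm /=; rewrite -cats1 takel_cat ?IH // size_Iseq //.
Qed.
Lemma nth_Iseq (T : Type) (B : nat -> nat -> T -> bool) w m r :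
  (r < m)%N -> nth 0%N (Iseq B w m) r = next_index B w r.+1 (Iseq B w r).
Proof.
move=> rm; rewrite -(nth_take 0%N (ltnSn r)) (take_Iseq B w rm).
rewrite [Iseq B w r.+1]/= nth_rcons size_Iseq ltnn eqxx.
done.
Qed.
Lemma Iseq_charac (T : Type) (B : nat -> nat -> T -> bool) w m (S : seq nat) :
  size S = m ->
  (Iseq B w m = S <->
   forall r, (r < m)%N -> next_index B w r.+1 (take r S) = nth 0%N S r).
Proof.
move=> Sm; split=> [IS r rm|].
  by rewrite -IS (take_Iseq B w (ltnW rm)) (nth_Iseq B w rm).
rewrite -Sm; clear Sm; elim/last_ind: S => [//|S x IH]; rewrite size_rcons => h.
rewrite [Iseq B w _.+1]/=.
have IS : Iseq B w (size S) = S.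
  apply: IH => r rS; have := h r (ltn_trans rS (ltnSn _)).
  by rewrite -cats1 (takel_cat _ (ltnW rS)) nth_cat rS.
have := h (size S) (leqnn _).
rewrite -cats1 take_size_cat // nth_cat ltnn subnn /= => <-.
by rewrite IS cats1.
Qed.
Definition cyl (T : Type) (B : nat -> nat -> T -> bool) (s : seq (nat * nat))
  (b : nat * nat -> bool) : set T :=
  [set w | forall k, k \in s -> B k.1 k.2 w = b k].
Lemma cyl_cons (T : Type) (B : nat -> nat -> T -> bool) k s b :
  cyl B (k :: s) b = [set w | B k.1 k.2 w = b k] `&` cyl B s b.
Proof.
apply/seteqP; split => w /=.
  by move=> h; split; [apply: h; rewrite mem_head|move=> k' ks; apply: h; rewrite in_cons ks orbT].
by move=> [h1 h2] k'; rewrite in_cons => /orP[/eqP ->|]; [|exact: h2].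
Qed.
Lemma cyl_cat (T : Type) (B : nat -> nat -> T -> bool) s1 s2 b :
  cyl B (s1 ++ s2) b = cyl B s1 b `&` cyl B s2 b.
Proof.
apply/seteqP; split => w /=.
  by move=> h; split => k ks; apply: h; rewrite mem_cat ks ?orbT.
by move=> [h1 h2] k; rewrite mem_cat => /orP[]; [exact: h1|exact: h2].
Qed.
Lemma cyl_undup (T : Type) (B : nat -> nat -> T -> bool) s b :
  cyl B (undup s) b = cyl B s b.
Proof. by apply/seteqP; split => w /= h k ks; apply: h; rewrite ?mem_undup in ks *. Qed.
Lemma ev_measurable d (T : measurableType d) (B : nat -> nat -> T -> bool) :
  (forall i j, measurable [set w | B i j w]) ->
  forall i j b, measurable [set w | B i j w = b].
Proof.
move=> hB i j [].
  by have -> : [set w | B i j w = true] = [set w | B i j w] by apply/seteqP; split => w.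
have -> : [set w | B i j w = false] = ~` [set w | B i j w].
  by apply/seteqP; split => w /=; case: (B i j w).
exact: measurableC.
Qed.
Lemma cyl_measurable d (T : measurableType d) (B : nat -> nat -> T -> bool) :
  (forall i j, measurable [set w | B i j w]) ->
  forall s b, measurable (cyl B s b).
Proof.
move=> hB; elim => [|k s IH] b.
  by have -> : cyl B [::] b = setT by apply/seteqP; split => w.
rewrite cyl_cons; apply: measurableI => //; exact: ev_measurable.
Qed.
Lemma ev_prob (R : realType) d (T : measurableType d) (P : probability T R) (q : R)
  (B : nat -> nat -> T -> bool) :
  (forall i j, measurable [set w | B i j w]) ->
  (forall i j, P [set w | B i j w] = (1 - q)%:E) ->
  forall i j b, P [set w | B i j w = b] = (if b then 1 - q else q)%:E.
Proof.
move=> hB hP i j [].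
  by have -> : [set w | B i j w = true] = [set w | B i j w] by apply/seteqP; split => w.
have -> : [set w | B i j w = false] = ~` [set w | B i j w].
  by apply/seteqP; split => w /=; case: (B i j w).
rewrite probability_setC // hP -EFinB; congr (_%:E); by rewrite opprB addrC subrK.
Qed.
Lemma cyl_prob (R : realType) d (T : measurableType d) (P : probability T R)
  (B : nat -> nat -> T -> bool) :
  mutually_independent_bool P (fun ij : nat * nat => B ij.1 ij.2) ->
  forall s b, uniq s ->
  P (cyl B s b) = (\prod_(k <- s) P [set w | B k.1 k.2 w = b k])%E.
Proof.
move=> hind s b us; by rewrite -(hind s b us).
Qed.
Lemma cyl_prob_false (R : realType) d (T : measurableType d) (P : probability T R) (q : R)
  (B : nat -> nat -> T -> bool) :
  (forall i j, measurable [set w | B i j w]) ->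
  (forall i j, P [set w | B i j w] = (1 - q)%:E) ->
  mutually_independent_bool P (fun ij : nat * nat => B ij.1 ij.2) ->
  forall s b, uniq s -> (forall k, k \in s -> b k = false) ->
  P (cyl B s b) = (q ^+ size s)%:E.
Proof.
move=> hB hP hind s b us hb; rewrite (cyl_prob hind b us).
elim: s us hb => [|k s IH] /=; first by rewrite big_nil.
move=> /andP[ks us] hb; rewrite big_cons hb ?mem_head // (ev_prob hB hP) IH //.
  by rewrite -EFinM exprS.
by move=> k' k's; apply: hb; rewrite in_cons k's orbT.
Qed.
Definition coordsH (m : nat) (S : seq nat) : seq (nat * nat) :=
  flatten [seq [seq (r.+1, j) | j <- iota 1 (nth 0%N S r) & j \notin take r S]
          | r <- iota 0 m].
Definition coordsZ (m k : nat) (S : seq nat) : seq (nat * nat) :=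
  [seq (m.+1, j) | j <- iota 1 (k + m) & j \notin S].
Definition bval (m : nat) (S : seq nat) (c : nat * nat) : bool :=
  if (c.1 <= m)%N then c.2 == nth 0%N S c.1.-1 else false.
Definition validS (m : nat) (S : seq nat) : bool :=
  all (fun r => (0 < nth 0%N S r)%N && (nth 0%N S r \notin take r S)) (iota 0 m).
Lemma mem_coordsH m S c : reflect
  (exists r j, [/\ c = (r.+1, j), (r < m)%N, (0 < j <= nth 0%N S r)%N & j \notin take r S])
  (c \in coordsH m S).
Proof.
apply: (iffP flatten_mapP) => [[r] |[r [j [-> rm jx jS]]]].
  rewrite mem_iota add0n => /andP[_ rm] /mapP[j]; rewrite mem_filter mem_iota.
  move=> /andP[jS /andP[j0 jx]] ->; exists r, j; split => //.
  by rewrite j0 /= -ltnS -(addn1 (nth _ _ _)) addnC.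
exists r; first by rewrite mem_iota.
apply/mapP; exists j => //; rewrite mem_filter mem_iota jS /=.
by case/andP: jx => -> /=; rewrite add1n ltnS.
Qed.
Lemma hist_cyl (T : Type) (B : nat -> nat -> T -> bool) w m S :
  size S = m -> validS m S ->
  (Iseq B w m = S <-> cyl B (coordsH m S) (bval m S) w).
Proof.
move=> Sm /allP vS; rewrite (Iseq_charac B w Sm); split.
  move=> h c /mem_coordsH [r [j [-> rm /andP[j0 jx] jS]]] /=.
  rewrite /bval /= rm /=.
  have := vS r; rewrite mem_iota add0n rm => /(_ isT) /andP[x0 xS].
  have hx := h r rm.
  have [] := @next_index_gt0 _ B w r.+1 (take r S); first by rewrite hx.
  rewrite hx => nS Bx hmin.
  have [->|jnx] := eqVneq j (nth 0%N S r); first by rewrite Bx.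
  apply/negbTE; apply: hmin => //; rewrite j0 /= ltn_neqAle jnx jx.
  done.
move=> hc r rm.
have := vS r; rewrite mem_iota add0n rm => /(_ isT) /andP[x0 xS].
have hcc : forall j, (0 < j <= nth 0%N S r)%N -> j \notin take r S ->
    B r.+1 j w = (j == nth 0%N S r).
  move=> j jr jS; have := hc (r.+1, j).
  rewrite /bval /= rm => -> //; apply/mem_coordsH; exists r, j; split => //.
apply: next_index_eq => //.
  by rewrite hcc ?eqxx ?x0 ?leqnn.
move=> j /andP[j0 jx] jS; rewrite hcc ?j0 ?(ltnW jx) //.
by rewrite (ltn_eqF jx).
Qed.
Definition Gn (T : Type) (B : nat -> nat -> T -> bool) (m n : nat) : set T :=
  match @pickle_inv (seq nat) n with
  | Some s => if (size s == m) && validS m s then cyl B (coordsH m s) (bval m s) else set0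
  | None => set0
  end.
Definition Fn (T : Type) (B : nat -> nat -> T -> bool) (m k n : nat) : set T :=
  match @pickle_inv (seq nat) n with
  | Some s => if (size s == m) && validS m s then
       cyl B (coordsH m s) (bval m s) `&` cyl B (coordsZ m k s) (bval m s) else set0
  | None => set0
  end.
Definition Eset (T : Type) (B : nat -> nat -> T -> bool) (m k : nat) : set T :=
  \bigcup_n Fn B m k n.
Lemma Gn_measurable d (T : measurableType d) (B : nat -> nat -> T -> bool) :
  (forall i j, measurable [set w | B i j w]) -> forall m n, measurable (Gn B m n).
Proof.
move=> hB m n; rewrite /Gn; case: pickle_inv => [s|//].
by case: ifP => // _; exact: cyl_measurable.
Qed.
Lemma Fn_measurable d (T : measurableType d) (B : nat -> nat -> T -> bool) :
  (forall i j, measurable [set w | B i j w]) -> forall m k n, measurable (Fn B m k n).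
Proof.
move=> hB m k n; rewrite /Fn; case: pickle_inv => [s|//].
by case: ifP => // _; apply: measurableI; exact: cyl_measurable.
Qed.
Lemma Eset_measurable d (T : measurableType d) (B : nat -> nat -> T -> bool) :
  (forall i j, measurable [set w | B i j w]) -> forall m k, measurable (Eset B m k).
Proof. by move=> hB m k; apply: bigcupT_measurable => n; exact: Fn_measurable. Qed.
Lemma Eset_cover (T : Type) (B : nat -> nat -> T -> bool) m k w :
  validS m (Iseq B w m) -> (k + m < next_index B w m.+1 (Iseq B w m))%N ->
  Eset B m k w.
Proof.
move=> vS lt; exists (pickle (Iseq B w m)) => //.
rewrite /Fn pickleK_inv size_Iseq eqxx vS /=; split.
  by apply/(hist_cyl B w (size_Iseq B w m) vS).
move=> c /mapP[j]; rewrite mem_filter mem_iota => /andP[jS /andP[j0 jk]] -> /=.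
rewrite /bval /= ltnn.
have [] := @next_index_gt0 _ B w m.+1 (Iseq B w m); first by rewrite (leq_ltn_trans _ lt).
move=> _ _ hmin; apply/negbTE; apply: hmin => //; rewrite j0 /=.
by apply: leq_ltn_trans lt; rewrite -ltnS -(addn1 (k + m)) addnC.
Qed.
Lemma coordsZ_size m k S : size S = m -> (k <= size (coordsZ m k S))%N.
Proof.
move=> Sm; rewrite size_map size_filter.
have := count_predC (fun j => j \in S) (iota 1 (k + m)).
rewrite size_iota.
have : (count (fun j => j \in S) (iota 1 (k + m)) <= m)%N.
  rewrite -size_filter -Sm; apply: uniq_leq_size; first exact/filter_uniq/iota_uniq.
  by move=> j; rewrite mem_filter => /andP[].
move=> h1 h2.
have -> : count (fun j => j \notin S) (iota 1 (k + m)) =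
          count (predC (fun j => j \in S)) (iota 1 (k + m)) by [].
lia.
Qed.
Lemma Fn_le (R : realType) d (T : measurableType d) (P : probability T R) (q : R)
  (B : nat -> nat -> T -> bool) :
  0 <= q -> q <= 1 ->
  (forall i j, measurable [set w | B i j w]) ->
  (forall i j, P [set w | B i j w] = (1 - q)%:E) ->
  mutually_independent_bool P (fun ij : nat * nat => B ij.1 ij.2) ->
  forall m k n, (P (Fn B m k n) <= (q ^+ k)%:E * P (Gn B m n))%E.
Proof.
move=> q0 q1 hB hP hind m k n; rewrite /Fn /Gn; case: pickle_inv => [s|]; last first.
  by rewrite !measure0 mule0.
case: ifP => [/andP[/eqP sm vs]|_]; last by rewrite !measure0 mule0.
have uZ : uniq (coordsZ m k s).
  rewrite map_inj_uniq; first exact/filter_uniq/iota_uniq.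
  by move=> a b [].
have u : uniq (undup (coordsH m s) ++ coordsZ m k s).
  rewrite cat_uniq undup_uniq uZ andbT /=; apply/hasPn => c /mapP[j _ ->].
  rewrite mem_undup; apply/negP => /mem_coordsH [r [j' [[e _] rm _ _]]].
  by move: rm; rewrite -e ltnn.
have bZ : forall c, c \in coordsZ m k s -> bval m s c = false.
  by move=> c /mapP[j _ ->]; rewrite /bval /= ltnn.
rewrite -(cyl_undup B (coordsH m s)) -cyl_cat (cyl_prob hind _ u) big_cat /=.
rewrite -(cyl_prob hind _ (undup_uniq _)) -(cyl_prob hind _ uZ).
rewrite (cyl_prob_false hB hP hind uZ bZ) cyl_undup muleC.
apply: lee_pmul => //; first by rewrite lee_fin exprn_ge0.
by rewrite lee_fin ler_wiXn2l // coordsZ_size.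
Qed.
Lemma Gn_triv d (T : measurableType d) (B : nat -> nat -> T -> bool) m :
  trivIset setT (Gn B m).
Proof.
move=> i j _ _ [w []]; rewrite /Gn.
have ei := @pickle_invK (seq nat) i; have ej := @pickle_invK (seq nat) j.
case: (pickle_inv i) ei => [si|//] /= <-.
case: (pickle_inv j) ej => [sj|//] /= <-.
case: ifP => // /andP[/eqP si_m vi] hi; case: ifP => // /andP[/eqP sj_m vj] hj.
have := (hist_cyl B w si_m vi).2 hi; have := (hist_cyl B w sj_m vj).2 hj.
by move=> -> ->.
Qed.
Lemma Eset_prob (R : realType) d (T : measurableType d) (P : probability T R) (q : R)
  (B : nat -> nat -> T -> bool) :
  0 <= q -> q <= 1 ->
  (forall i j, measurable [set w | B i j w]) ->
  (forall i j, P [set w | B i j w] = (1 - q)%:E) ->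
  mutually_independent_bool P (fun ij : nat * nat => B ij.1 ij.2) ->
  forall m k, (P (Eset B m k) <= (q ^+ k)%:E)%E.
Proof.
move=> q0 q1 hB hP hind m k.
apply: (le_trans (measure_sigma_subadditive P (Fn_measurable hB m k)
   (Eset_measurable hB m k) (@subset_refl _ _))).
apply: le_trans.
  apply: (@lee_nneseries _ _ (fun n => (q ^+ k)%:E * P (Gn B m n))%E).
    by move=> n _ _; exact: measure_ge0.
  by move=> n _; exact: (Fn_le q0 q1 hB hP hind m k n).
rewrite nneseriesZl; last by move=> n _; exact: measure_ge0.
rewrite (_ : (\sum_(0 <= i <oo) P (Gn B m i))%E = P (\bigcup_(n in setT) Gn B m n)); last first.
  rewrite measure_bigcup; [|by move=> n _; exact: Gn_measurable|exact: Gn_triv].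
  by apply: eq_eseriesl => i; rewrite in_setT.
rewrite -[X in (_ <= X)%E]mule1; apply: lee_pmul.
- by rewrite lee_fin exprn_ge0.
- exact: measure_ge0.
- by [].
- apply: probability_le1; apply: bigcup_measurable => n _; exact: Gn_measurable.
Qed.
Definition goodw (T : Type) (B : nat -> nat -> T -> bool) (w : T) : Prop :=
  forall i M, exists j, (M < j)%N /\ B i j w.
Lemma small_le0 (R : realType) (q x : R) : 0 <= q -> q < 1 -> 0 <= x ->
  (forall K, x <= q ^+ K) -> x = 0.
Proof.
move=> q0 q1 x0 h; apply/eqP; rewrite eq_le x0 andbT; apply/negP => /negP.
rewrite -ltNge => xpos.
have := @cvg_expr R q; rewrite ger0_norm // => /(_ q1).
move/cvgrPdist_lt => /(_ x xpos) [N _ hN].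
have := hN N (leqnn N); rewrite /= sub0r normrN ger0_norm ?exprn_ge0 //.
by rewrite ltNge h.
Qed.
Lemma good_ae (R : realType) d (T : measurableType d) (P : probability T R) (q : R)
  (B : nat -> nat -> T -> bool) :
  0 <= q -> q < 1 ->
  (forall i j, measurable [set w | B i j w]) ->
  (forall i j, P [set w | B i j w] = (1 - q)%:E) ->
  mutually_independent_bool P (fun ij : nat * nat => B ij.1 ij.2) ->
  {ae P, forall w, goodw B w}.
Proof.
move=> q0 q1 hB hP hind.
apply: ae_foralln => i; apply: ae_foralln => M.
pose A := \bigcap_(j in [set j | (M < j)%N]) [set w | B i j w = false].
have mA : measurable A.
  by apply: bigcap_measurableType => j _; exact: ev_measurable.
exists A; split => //.
  have hK : forall K, (P A <= (q ^+ K)%:E)%E.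
    move=> K; pose s := [seq (i, j) | j <- iota M.+1 K].
    have us : uniq s by rewrite map_inj_uniq ?iota_uniq // => a b [].
    have <- : size s = K by rewrite size_map size_iota.
    rewrite -(cyl_prob_false hB hP hind (b := fun _ => false) us) //.
    apply: le_measure; rewrite ?inE //; first exact: cyl_measurable.
    move=> w Aw c /mapP[j]; rewrite mem_iota => /andP[Mj _] -> /=.
    by apply: Aw.
  suff PA : P A = 0 by exact: PA.
  have PA0 : (0 <= P A)%E := measure_ge0 P A.
  case E: (P A) hK PA0 => [x| |] hK PA0.
  - rewrite lee_fin in PA0; suff -> : x = 0 by []; apply: (small_le0 q0 q1 PA0).
    by move=> K; have := hK K; rewrite lee_fin.
  - by have := hK 0%N.
  - by [].
move=> w /= nex j /= Mj; apply/negbTE/negP => Bj; apply: nex; exists j; split => //.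
Qed.
Lemma good_valid (T : Type) (B : nat -> nat -> T -> bool) w m :
  goodw B w -> validS m (Iseq B w m).
Proof.
move=> g; apply/allP => r; rewrite mem_iota add0n => /andP[_ rm].
rewrite (nth_Iseq B w rm) (take_Iseq B w (ltnW rm)).
have p := next_index_pos (Iseq B w r) (g r.+1).
by have [nS _ _] := next_index_gt0 p; rewrite p nS.
Qed.
Lemma good_uniq (T : Type) (B : nat -> nat -> T -> bool) w n :
  goodw B w -> uniq (Iseq B w n) /\ (forall x, x \in Iseq B w n -> (0 < x)%N).
Proof.
move=> g; elim: n => [//|n [u p]] /=.
have pos := next_index_pos (Iseq B w n) (g n.+1).
have [nS _ _] := next_index_gt0 pos.
rewrite rcons_uniq nS u; split => // x; rewrite mem_rcons in_cons.
by case/orP => [/eqP ->|]; [|exact: p].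
Qed.
Lemma max_ge (T : Type) (B : nat -> nat -> T -> bool) w n :
  goodw B w -> (n <= \max_(i <- Iseq B w n) i)%N.
Proof.
move=> g; have [u p] := good_uniq n g.
rewrite -{1}(size_Iseq B w n) -[X in (_ <= X)%N](size_iota 1).
apply: uniq_leq_size => // x xI; rewrite mem_iota (p x xI) /= add1n ltnS.
exact: (@leq_bigmax_seq _ _ xpredT (fun i => i) x xI isT).
Qed.
Lemma max_le (T : Type) (B : nat -> nat -> T -> bool) w n k :
  (forall m, (m < n)%N -> (next_index B w m.+1 (Iseq B w m) <= k + m)%N) ->
  (\max_(i <- Iseq B w n) i <= k + n)%N.
Proof.
move=> h; apply/bigmax_leqP_seq => x /(nthP 0%N) [r].
rewrite size_Iseq => rn <- _; rewrite (nth_Iseq B w rn).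
by apply: leq_trans (h r rn) _; rewrite leq_add2l ltnW.
Qed.
Lemma cube_ge n : (3 <= n)%N -> (n.+1 * n.+2 <= n ^ 3)%N.
Proof. move=> h; rewrite (_ : n ^ 3 = n * n * n)%N; last by rewrite !expnS expn0 muln1 mulnA. nia. Qed.
Lemma numeric (R : realType) (r eps : R) (a : nat -> R) :
  0 < r -> r < 1 -> 0 < eps ->
  (fun n => a n / ln n%:R) @ \oo --> +oo ->
  exists N, forall n, (N <= n)%N ->
    n%:R * r ^+ (Num.truncn (eps * a n)) <= (n.+1%:R)^-1 - (n.+2%:R)^-1.
Proof.
move=> r0 r1 e0 ha.
set L := - ln r.
have L0 : 0 < L by rewrite oppr_gt0 ln_lt0 // r0 r1.
set c := 4 / L.
have c0 : 0 < c by rewrite divr_gt0.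
move/cvgryPge: ha => /(_ ((c + 1) / eps)) [N1 _ hN1].
set N2 := (Num.truncn (expR (1 : R))).+1.
exists (maxn N1 (maxn 3 N2)) => n; rewrite !geq_max => /and3P[n1 n3 n2].
have hn : (c + 1) / eps <= a n / ln n%:R := hN1 n n1.
have npos : 0 < n%:R :> R by rewrite ltr0n; lia.
have en : expR 1 <= n%:R :> R.
  apply: le_trans (ltW (truncnS_gt _)) _; rewrite ler_nat //.
have ln1 : 1 <= ln n%:R :> R.
  by rewrite -[X in X <= _](expRK 1) ler_ln // posrE expR_gt0.
have lnpos : 0 < ln n%:R :> R by apply: lt_le_trans ln1.
rewrite ler_pdivlMr // in hn.
have ha' : (c + 1) * ln n%:R <= eps * a n.
  have := ler_wpM2l (ltW e0) hn.
  have -> : eps * ((c + 1) / eps * ln n%:R) = (c + 1) * ln n%:R.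
    by field; rewrite gt_eqF.
  by [].
set k := Num.truncn (eps * a n).
have hk1 := truncnS_gt (eps * a n); rewrite -/k in hk1.
have hk : c * ln n%:R < k%:R.
  rewrite -natr1 in hk1; rewrite mulrDl mul1r in ha'.
  clear -ha' hk1 ln1; lra.
have rk : r ^+ k <= (n%:R ^+ 4)^-1.
  rewrite -(lnK (x := r)) ?posrE // -expRM_natl.
  rewrite -[X in (X ^+ 4)^-1](lnK (x := n%:R)) ?posrE // -expRM_natl -expRN.
  rewrite ler_expR.
  have e1 : c * ln n%:R * L = 4 * ln n%:R by rewrite /c; field; rewrite gt_eqF.
  have : c * ln n%:R * L <= k%:R * L by rewrite ler_pM2r // ltW.
  by rewrite e1 /L lerNr -mulrN.
have e2 : (n.+1%:R)^-1 - (n.+2%:R)^-1 = ((n.+1 * n.+2)%N%:R)^-1 :> R.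
  rewrite natrM; field; apply/andP; split; apply: lt0r_neq0; clear -npos; lra.
rewrite e2.
apply: le_trans (ler_wpM2l (ltW npos) rk) _.
have e3 : n%:R * (n%:R ^+ 4)^-1 = ((n ^ 3)%N%:R)^-1 :> R.
  by rewrite natrX exprS invfM mulrA mulfV ?mul1r // gt_eqF.
have h3 := cube_ge n3.
rewrite e3 lef_pV2 ?posrE ?ltr0n ?ler_nat //.
by rewrite expn_gt0 (leq_trans _ n3).
Qed.
Lemma An_prob (R : realType) d (T : measurableType d) (P : probability T R) (q : R)
  (B : nat -> nat -> T -> bool) :
  0 <= q -> q <= 1 ->
  (forall i j, measurable [set w | B i j w]) ->
  (forall i j, P [set w | B i j w] = (1 - q)%:E) ->
  mutually_independent_bool P (fun ij : nat * nat => B ij.1 ij.2) ->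
  forall n k, (P (\big[setU/set0]_(m < n) Eset B m k) <= (n%:R * q ^+ k)%:E)%E.
Proof.
move=> q0 q1 hB hP hind n k.
apply: le_trans.
  apply: (@content_subadditive _ _ _ P _ (fun m => Eset B m k) n).
  - by move=> m _; exact: Eset_measurable.
  - by apply: bigsetU_measurable => m _; exact: Eset_measurable.
  - by [].
apply: le_trans.
  apply: (@lee_sum _ _ _ (fun _ => (q ^+ k)%:E)) => m _.
  exact: (Eset_prob q0 q1 hB hP hind).
by rewrite sumEFin sumr_const card_ord lee_fin mulr_natl.
Qed.
Lemma telescope_le1 (R : realType) K :
  \sum_(0 <= i < K) ((i.+1%:R)^-1 - (i.+2%:R)^-1) <= 1 :> R.
Proof.
have -> : \sum_(0 <= i < K) ((i.+1%:R)^-1 - (i.+2%:R)^-1) = 1 - (K.+1%:R)^-1 :> R.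
  elim: K => [|K IH]; first by rewrite big_nil invr1 subrr.
  by rewrite big_nat_recr //= IH addrA subrK.
by rewrite lerBlDr lerDl invr_ge0 ler0n.
Qed.
Lemma series_fin (R : realType) (u : nat -> \bar R) :
  (forall n, 0 <= u n)%E ->
  (forall n, u n <= ((n.+1%:R)^-1 - (n.+2%:R)^-1)%:E)%E ->
  (\sum_(0 <= n <oo) u n < +oo)%E.
Proof.
move=> u0 hu; apply: (@le_lt_trans _ _ 1%E); last by rewrite ltry.
apply: lime_le; first by apply: is_cvg_nneseries => n _ _; exact: u0.
apply: nearW => K /=; apply: le_trans.
  by apply: (@lee_sum _ _ _ (fun n => ((n.+1%:R)^-1 - (n.+2%:R)^-1)%:E)) => n _.
by rewrite sumEFin lee_fin telescope_le1.
Qed.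
Lemma ae_eventually (R : realType) d (T : measurableType d) (P : probability T R) (q : R)
  (B : nat -> nat -> T -> bool) :
  0 <= q -> q < 1 ->
  (forall i j, measurable [set w | B i j w]) ->
  (forall i j, P [set w | B i j w] = (1 - q)%:E) ->
  mutually_independent_bool P (fun ij : nat * nat => B ij.1 ij.2) ->
  forall (a : nat -> R) (eps : R), 0 < eps ->
  (fun n => a n / ln n%:R) @ \oo --> +oo ->
  {ae P, forall w, exists N, forall n, (N <= n)%N ->
     ~ (\big[setU/set0]_(m < n) Eset B m (Num.truncn (eps * a n))) w}.
Proof.
move=> q0 q1 hB hP hind a eps e0 ha.
set r := (1 + q) / 2.
have r0 : 0 < r by rewrite /r; lra.
have r1 : r < 1 by rewrite /r; lra.
have qr : q <= r by rewrite /r; lra.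
have [N hN] := numeric r0 r1 e0 ha.
set k := fun n => Num.truncn (eps * a n).
pose A n := if (N <= n)%N then \big[setU/set0]_(m < n) Eset B m (k n) else set0.
have mA : forall n, measurable (A n).
  move=> n; rewrite /A; case: ifP => // _.
  by apply: bigsetU_measurable => m _; exact: Eset_measurable.
have PA : forall n, (P (A n) <= ((n.+1%:R)^-1 - (n.+2%:R)^-1)%:E)%E.
  move=> n; rewrite /A; case: ifP => [Nn|_].
    apply: le_trans (An_prob q0 (ltW q1) hB hP hind n (k n)) _.
    rewrite lee_fin; apply: le_trans (hN n Nn).
    rewrite ler_wpM2l //; apply: lerXn2r => //; rewrite nnegrE //; exact: ltW.
  have -> : P set0 = 0%E by exact: measure0.
  by rewrite lee_fin subr_ge0 lef_pV2 ?posrE ?ltr0n // ler_nat.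
have fin := series_fin (fun n => measure_ge0 P (A n)) PA.
have L0 := lim_sup_set_cvg0 mA fin.
exists (lim_sup_set A); split.
- by apply: bigcap_measurable => // j _; apply: bigcup_measurable => n _.
- exact: L0.
move=> w /= hw j _.
have [n [jn An]] : exists n, (maxn j N <= n)%N /\
    (\big[setU/set0]_(m < n) Eset B m (k n)) w.
  apply: contra_notP hw => h; exists (maxn j N) => n jn An; apply: h; exists n.
  by split.
exists n; first by move: jn; rewrite geq_max => /andP[].
by rewrite /A; move: jn; rewrite geq_max => /andP[_ ->].
Qed.
Lemma n_over_ln (R : realType) :
  (fun n : nat => n%:R / ln (n%:R : R)) @ \oo --> +oo.
Proof.
apply/cvgryPge => M.
set N := maxn 3 (Num.truncn ((2 * M) ^+ 2)).+1.
exists N => // n; rewrite /= geq_max => /andP[n3 nM].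
have npos : 0 < n%:R :> R by rewrite ltr0n; lia.
set s := Num.sqrt (n%:R : R).
have s0 : 0 < s by rewrite sqrtr_gt0.
have ns : n%:R = s ^+ 2 :> R by rewrite sqr_sqrtr // ltW.
have lnpos : 0 < ln (n%:R : R).
  by apply: ln_gt0; rewrite ltr1n; lia.
have lns : ln (n%:R : R) <= 2 * s.
  rewrite ns lnXn // mulr_natl; apply: ltW; rewrite mulr2n.
  by apply: ltrD; exact: ln_sublinear.
have Ms : 2 * M <= s.
  apply: le_trans (ler_norm _) _; rewrite -sqrtr_sqr /s ler_sqrt ?ler0n //.
  apply: ltW; apply: lt_le_trans (truncnS_gt _) _; rewrite ler_nat //.
rewrite ler_pdivlMr //.
have [M0|M0] := leP M 0.
  by apply: le_trans (ler_wnM2l _ _) _; [exact: M0|exact: ltW lnpos|rewrite mulr0 ler0n].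
apply: le_trans (ler_wpM2l (ltW M0) lns) _.
rewrite ns mulrA (mulrC M) expr2; apply: ler_wpM2r => //; exact: ltW.
Qed.
Lemma part_a (R : realType) d (T : measurableType d) (P : probability T R) (q : R)
  (B : nat -> nat -> T -> bool) :
  0 <= q -> q < 1 ->
  (forall i j, measurable [set w | B i j w]) ->
  (forall i j, P [set w | B i j w] = (1 - q)%:E) ->
  mutually_independent_bool P (fun ij : nat * nat => B ij.1 ij.2) ->
  forall a : nat -> R, (forall n, (0 < n)%N -> 0 < a n) ->
     (fun n => a n / ln n%:R) @ \oo --> +oo ->
     {ae P, forall w, (fun n => Fvar (R:=R) B n w / a n) @ \oo --> 0}.
Proof.
move=> q0 q1 hB hP hind a apos ha.
have epos : forall p : nat, 0 < (p.+1%:R : R)^-1 by move=> p; rewrite invr_gt0 ltr0n.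
have hall := ae_foralln (fun p => ae_eventually q0 q1 hB hP hind (epos p) ha).
have hg := good_ae q0 q1 hB hP hind.
apply: filterS2 hg hall => w g h.
apply/cvgrPdist_le => e e0.
set p := Num.truncn (e^-1).
have pe : (p.+1%:R)^-1 <= e.
  have h1 := truncnS_gt (e^-1); rewrite -/p in h1.
  rewrite -(invrK e) lef_pV2 ?posrE ?invr_gt0 ?ltr0n //; exact: ltW.
have [N hN] := h p.
near=> n.
have n1 : (maxn N 1 <= n)%N by near: n; exact: nbhs_infty_ge.
move: n1; rewrite geq_max => /andP[Nn n0].
set k := Num.truncn ((p.+1%:R)^-1 * a n).
have hmax : (\max_(i <- Iseq B w n) i <= k + n)%N.
  apply: max_le => m mn; rewrite leqNgt; apply/negP => lt.
  apply: (hN n Nn); rewrite -(bigcup_mkord n (fun m => Eset B m k)); exists m => //.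
  exact: (Eset_cover (good_valid m g) lt).
have hmin := max_ge n g.
have an0 := apos n n0.
have F0 : 0 <= Fvar (R:=R) B n w by rewrite /Fvar subr_ge0 ler_nat.
have Fk : Fvar (R:=R) B n w <= k%:R.
  by rewrite /Fvar lerBlDr -natrD ler_nat.
have keps : k%:R <= (p.+1%:R)^-1 * a n.
  by rewrite truncn_le mulr_ge0 // ?invr_ge0 ?ler0n // ltW.
rewrite sub0r normrN ger0_norm ?divr_ge0 // ?(ltW an0) //.
rewrite ler_pdivrMr //.
apply: le_trans Fk _; apply: le_trans keps _.
by apply: ler_wpM2r pe; exact: ltW.
Unshelve. all: by end_near.
Qed.
Unset Implicit Arguments.

Theorem lemma2p2 (R : realType) (d : measure_display) (T : measurableType d)
  (P : probability T R) (q : R) (B : nat -> nat -> T -> bool) :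
  0 <= q -> q < 1 ->
  (forall i j, measurable [set w | B i j w]) ->
  (forall i j, P [set w | B i j w] = (1 - q)%:E) ->
  mutually_independent_bool P (fun ij : nat * nat => B ij.1 ij.2) ->
  (forall a : nat -> R, (forall n, (0 < n)%N -> 0 < a n) ->
     (fun n => a n / ln n%:R) @ \oo --> +oo ->
     {ae P, forall w, (fun n => Fvar (R:=R) B n w / a n) @ \oo --> 0}) /\
  {ae P, forall w, (fun n => Fvar (R:=R) B n w / n%:R) @ \oo --> 0}.
Proof.
move=> q0 q1 hB hP hind; split; first exact: (part_a q0 q1 hB hP hind).
apply: (part_a q0 q1 hB hP hind (a := fun n => n%:R)).
  by move=> n n0; rewrite ltr0n.
exact: n_over_ln.
Qed.
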